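(* Let $m\ge t\ge 0$ be integers and let $\mathcal{D}_{test}$ be a finite test set. For each $\mathcal{J}\subseteq\{1,\dots,m\}$ with $|\mathcal{J}|=t$, let $A(\mathcal{J})$ be the fraction of test pairs $(\mathbf{c}_{test},y_{test})\in\mathcal{D}_{test}$ such that the clean ensemble prediction $y$ equals $y_{test}$ and $$N_y-\sum_{j\in\mathcal{J}}\mathbb{I}(p_j=y)\ge\max_{l\neq y}\Bigl(N_l+\mathbb{I}(y>l)+\sum_{j\in\mathcal{J}}\mathbb{I}(p_j\neq l)\Bigr),$$ where $p_j$ are the clean base predictions for $\mathbf{c}_{test}$ and $N_l$ the clean vote counts. Suppose an attack changes base predictions only for indices in a fixed set $\mathcal{J}_0$ with $|\mathcal{J}_0|\le t$, the same for all test points. Then the accuracy of the attacked ensemble on the attacked test set is at least $\min_{|\mathcal{J}|=t}A(\mathcal{J})$.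
   Context: Setting (ConceptGuard): concepts partitioned into $m$ disjoint groups; base classifier $f^j$ trained on group $j$; clean base predictions $p_j=f^j(\mathcal{G}^j(\mathbf{c}_{test});\mathcal{D}(\phi))$, clean vote counts $N_l=\sum_j\mathbb{I}(p_j=l)$, ensemble prediction $\arg\max_l N_l$ with ties broken toward the smallest label. An attack that ''changes base predictions only for indices in $\mathcal{J}_0$'' means the post-attack base predictions equal the clean ones for $j\notin\mathcal{J}_0$. $\mathbb{I}$ is the indicator function. *)

(* Defs.v *)
From HB Require Import structures.
From mathcomp Require Import all_boot all_order all_algebra.
Set Implicit Arguments. Unset Strict Implicit. Unset Printing Implicit Defensive.
Import Order.TTheory GRing.Theory Num.Theory.

Definition votes (m k : nat) (p : 'I_m -> 'I_k.+1) (l : 'I_k.+1) : nat :=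
  #|[set j | p j == l]|.

(* ensemble prediction: argmax_l N_l, ties broken toward the smallest label.
   Specified as the unique label l that maximizes the votes and strictly beats
   every smaller label (such a label always exists; ord0 is a dummy default). *)
Definition ensemble (m k : nat) (p : 'I_m -> 'I_k.+1) : 'I_k.+1 :=
  odflt ord0 [pick l | [forall l', votes p l' <= votes p l]
                       && [forall l' : 'I_k.+1, (l' < l)%N ==> (votes p l' < votes p l)]].

Definition certified (m k : nat) (p : 'I_m -> 'I_k.+1) (J : {set 'I_m}) : bool :=
  let y := ensemble p in
  (votes p y - #|[set j in J | p j == y]|
     >= \max_(l | l != y) (votes p l + ((l : nat) < y)%N + #|[set j in J | p j != l]|))%N.

(* A(J): fraction of test points (indexed by 'I_n, with clean base predictions
   p i and true label y i) that are correctly classified and certified for J. *)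
Definition A_frac (n m k : nat) (p : 'I_n -> 'I_m -> 'I_k.+1) (y : 'I_n -> 'I_k.+1)
  (J : {set 'I_m}) : rat :=
  (#|[set i | (ensemble (p i) == y i) && certified (p i) J]|)%:R / n%:R.

Definition accuracy (n m k : nat) (q : 'I_n -> 'I_m -> 'I_k.+1) (y : 'I_n -> 'I_k.+1) : rat :=
  (#|[set i | ensemble (q i) == y i]|)%:R / n%:R.

(* Main.v *)
Require Import Defs.
From HB Require Import structures.
From mathcomp Require Import all_boot all_order all_algebra.
From mathcomp Require Import zify.
Import Order.TTheory GRing.Theory Num.Theory.

Lemma grow (T : finType) (J0 : {set T}) d : (#|J0| + d <= #|T|)%N ->
  exists J : {set T}, J0 \subset J /\ #|J| = (#|J0| + d)%N.
Proof.
elim: d => [|d IH] h; first by exists J0; rewrite addn0.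
have [J [sJ cJ]] := IH (ltac:(lia)).
have : (0 < #|~: J|)%N.
  have := cardsC J; rewrite cJ => e; move: h; rewrite -e addnS; lia.
case/card_gt0P => x; rewrite inE => xJ.
exists (x |: J); split; first by apply: subset_trans sJ (subsetUr _ _).
by rewrite cardsU1 xJ cJ addnS.
Qed.

Lemma pick_uniq m k (q : 'I_m -> 'I_k.+1) (y : 'I_k.+1) :
  (forall l, votes q l <= votes q y)%N ->
  (forall l : 'I_k.+1, (l < y)%N -> (votes q l < votes q y)%N) -> ensemble q = y.
Proof.
move=> h1 h2; rewrite /ensemble; case: pickP => [x /andP[/forallP hx1 /forallP hx2]|/(_ y)].
  have e : votes q x = votes q y by apply/eqP; rewrite eqn_leq h1 hx1.
  case: (ltngtP x y) => [lt|lt|]; last by move=> e'; apply/val_inj.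
  - by have := h2 _ lt; rewrite e ltnn.
  - by have := implyP (hx2 y) lt; rewrite e ltnn.
rewrite (_ : [forall l', _] = true); last by apply/forallP.
rewrite (_ : [forall l' : 'I_k.+1, _] = true) //; apply/forallP => l; apply/implyP; exact: h2.
Qed.

Lemma robust m k (p q : 'I_m -> 'I_k.+1) (J : {set 'I_m}) :
  (forall j, j \notin J -> q j = p j) -> certified p J -> ensemble q = ensemble p.
Proof.
rewrite /certified; set y := ensemble p => hq hc.
have hy : (votes p y - #|[set j in J | p j == y]| <= votes q y)%N.
  rewrite leq_subLR /votes.
  apply: leq_trans (leq_card_setU _ _); apply: subset_leq_card.
  apply/subsetP => j; rewrite !inE => /eqP pj.
  case: (boolP (j \in J)) => jJ /=; first by rewrite pj eqxx.
  by rewrite hq // pj eqxx.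
have hl : forall l, (votes q l <= votes p l + #|[set j in J | p j != l]|)%N.
  move=> l; rewrite /votes.
  apply: leq_trans (leq_card_setU _ _); apply: subset_leq_card.
  apply/subsetP => j; rewrite !inE => /eqP qj.
  case: (boolP (j \in J)) => jJ; last by rewrite -hq // qj eqxx.
  by case: (p j == l).
have key : forall l, l != y -> (votes q l + (l < y)%N <= votes q y)%N.
  move=> l ly; apply: leq_trans (leq_trans _ hc) hy.
  have hb := @leq_bigmax_cond _ (fun l => l != y) (fun l : 'I_k.+1 => votes p l + ((l : nat) < y)%N + #|[set j in J | p j != l]|)%N l ly.
  apply: (leq_trans _ hb) => /=.
  by rewrite addnAC leq_add2r; exact: hl.
apply: pick_uniq => l.
  case: (eqVneq l y) => [->//|ly]; exact: leq_trans (leq_addr _ _) (key _ ly).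
move=> lt; have ly : l != y by rewrite neq_ltn lt.
by have := key _ ly; rewrite lt addn1.
Qed.

Local Open Scope ring_scope.
Theorem mainTheorem4 (n m k t : nat) (htm : (t <= m)%N)
  (p : 'I_n -> 'I_m -> 'I_k.+1) (y : 'I_n -> 'I_k.+1)
  (q : 'I_n -> 'I_m -> 'I_k.+1) (J0 : {set 'I_m})
  (hJ0 : (#|J0| <= t)%N)
  (hq : forall (i : 'I_n) (j : 'I_m), j \notin J0 -> q i j = p i j) :
  exists J : {set 'I_m}, #|J| = t /\ A_frac p y J <= accuracy q y.
Proof.
have [J [sJ cJ]] : exists J : {set 'I_m}, J0 \subset J /\ #|J| = (#|J0| + (t - #|J0|))%N.
  by apply: grow; rewrite card_ord; lia.
exists J; split; first by rewrite cJ; lia.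
rewrite /A_frac /accuracy ler_wpM2r ?invr_ge0 ?ler0n // ler_nat.
apply: subset_leq_card; apply/subsetP => i; rewrite !inE => /andP[/eqP e c].
rewrite (@robust _ _ (p i) _ J) ?e //.
move=> j jJ; apply: hq; apply: contra jJ; exact: (subsetP sJ).
Qed.
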